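(* Let $(V,q)$ be a Minkowski space and let $\|\cdot\|$ be an arbitrary norm on $V$. There exists a constant $M>0$ such that for all $x,y\in V$ there exists $z\in\mathcal{C}(x)\cap\mathcal{C}(y)$ with $\|z-x\|\le M\,\|y-x\|$.
   Context: A Minkowski space is a pair $(V,q)$ where $V$ is a finite-dimensional real vector space of dimension $n>1$ and $q$ is a quadratic form on $V$ of signature $(1,n-1)$. For $a\in V$, $\mathcal{C}(a)=\{m\in V: q(m-a)=0\}$. *)

(* Defs.v *)
From HB Require Import structures.
From mathcomp Require Import all_boot all_order all_algebra.
From mathcomp Require Import reals.
Set Implicit Arguments. Unset Strict Implicit. Unset Printing Implicit Defensive.
Import Order.TTheory GRing.Theory Num.Theory.
Local Open Scope ring_scope.

(* V is modelled as R^n = 'rV[R]_n (any n-dim real vector space is linearly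
   isomorphic to it); a quadratic form on R^n is v |-> v A v^T for a unique
   symmetric matrix A. *)
Definition qform (R : realType) (n : nat) (A : 'M[R]_n) (v : 'rV[R]_n) : R :=
  (v *m A *m v^T) 0 0.

Definition minkowski_diag (R : realType) (n : nat) : 'M[R]_n :=
  diag_mx (\row_(i < n) (if (i : nat) == 0%N then 1 else -1)).

(* The quadratic form with symmetric matrix A has signature (1, n-1):
   it is congruent to diag(1,-1,...,-1) (Sylvester). *)
Definition signature_1_nm1 (R : realType) (n : nat) (A : 'M[R]_n) : Prop :=
  A^T = A /\
  exists P : 'M[R]_n, P \in unitmx /\ P *m A *m P^T = minkowski_diag R n.

Definition is_norm (R : realType) (n : nat) (N : 'rV[R]_n -> R) : Prop :=
  (forall x, N x = 0 -> x = 0) /\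
  (forall (a : R) x, N (a *: x) = `|a| * N x) /\
  (forall x y, N (x + y) <= N x + N y).

Definition light_cone (R : realType) (n : nat) (A : 'M[R]_n) (a : 'rV[R]_n)
  : 'rV[R]_n -> Prop := fun m => qform A (m - a) = 0.

(* Main.v *)
From HB Require Import structures.
From mathcomp Require Import all_boot all_order all_algebra.
From mathcomp Require Import all_classical all_reals all_analysis.
From mathcomp Require Import ring lra.
Require Import Defs.
Import Order.TTheory GRing.Theory Num.Theory.
Import numFieldNormedType.Exports.
Local Open Scope ring_scope.

Section Norms.
Variables (R : realType) (n : nat) (N : 'rV[R]_n -> R).
Hypothesis hN : is_norm N.

Lemma N0 : N 0 = 0.
Proof. case: hN => _ [hZ _]. by rewrite -(scale0r (0 : 'rV[R]_n)) hZ normr0 mul0r. Qed.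

Lemma NN x : N (- x) = N x.
Proof. case: hN => _ [hZ _]. by rewrite -scaleN1r hZ normrN normr1 mul1r. Qed.

Lemma Nge0 x : 0 <= N x.
Proof.
case: hN => _ [_ hT]. have := hT x (- x). rewrite subrr N0 NN.
move=> h; lra.
Qed.

Lemma Nsum (I : Type) (s : seq I) (F : I -> 'rV[R]_n) :
  N (\sum_(i <- s) F i) <= \sum_(i <- s) N (F i).
Proof.
case: hN => _ [_ hT].
elim: s => [|a s IH]; first by rewrite !big_nil N0.
rewrite !big_cons. apply: le_trans (hT _ _) _. by rewrite lerD2l.
Qed.

Lemma Nupper : exists2 C : R, 0 <= C & forall (x : 'rV[R]_n) (B : R), (forall i, `|x 0 i| <= B) -> N x <= C * B.
Proof.
case: hN => _ [hZ _].
exists (\sum_(j < n) N 'e_j); first by apply: sumr_ge0 => j _; apply: Nge0.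
move=> x B hB. rewrite {1}(row_sum_delta x). apply: le_trans (Nsum _ _ _) _.
rewrite mulr_suml. apply: ler_sum => j _. rewrite hZ mulrC.
apply: ler_wpM2l; [exact: Nge0 | exact: hB].
Qed.

Lemma coord_le_mxnorm (x : 'rV[R]_n) i : `|x 0 i| <= `|x|.
Proof.
have /mapP[j Hj ->] : `|x 0 i| \in [seq `|x k.1 k.2| | k : 'I_1 * 'I_n].
  by apply/mapP; exists (ord0, i) => //=; rewrite mem_enum.
by rewrite [leRHS]/Num.Def.normr /= mx_normrE; apply/bigmax_geP; right => /=; exists j.
Qed.

Lemma N_cont : continuous N.
Proof.
have [C C0 hC] := Nupper.
have hL x : N x <= C * `|x|. by apply: hC => i; apply: coord_le_mxnorm.
case: hN => _ [_ hT].
move=> x. apply: (proj2 (@cvgrPdist_le _ _ _ (nbhs x) _ N (N x))) => e e0.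
near=> y.
have h1 : N x <= N y + N (x - y). by have := hT y (x - y); rewrite addrC subrK.
have h2 : N y <= N x + N (x - y). by have := hT x (y - x); rewrite addrC subrK -opprB NN.
have h3 : C * `|x - y| <= e.
  have : `|x - y| <= e / (C + 1).
    near: y. apply: cvgr_dist_le => //. by rewrite divr_gt0 // ltr_wpDl.
  move=> hxy. apply: le_trans (_ : (C + 1) * (e / (C + 1)) <= e).
    apply: ler_pM => //. by rewrite lerDl.
  by rewrite mulrC divfK // gt_eqF // ltr_wpDl.
rewrite ler_norml; apply/andP; split.
  have := hL (x - y); lra.
have := hL (x - y); lra.
Unshelve. all: by end_near.
Qed.

End Norms.
Lemma Nlower (R : realType) (m : nat) (N : 'rV[R]_m.+1 -> R) : is_norm N ->
  exists2 c : R, 0 < c & forall (x : 'rV[R]_m.+1) i, c * `|x 0 i| <= N x.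
Proof.
move=> hN.
pose S := [set x : 'rV[R]_m.+1 | `|x| = 1]%classic.
have S0 : (S !=set0)%classic.
  pose v : 'rV[R]_m.+1 := const_mx 1.
  have v0 : `|v| != 0.
    rewrite normr_eq0; apply/eqP => /matrixP /(_ 0 0). rewrite !mxE => /eqP.
    by rewrite oner_eq0.
  exists (`|v|^-1 *: v). by rewrite /S /= normrZ normfV normr_id mulVf.
have cS : compact S.
  apply: bounded_closed_compact.
    exists 1; split; first by rewrite num_real.
    by move=> M M1 x; rewrite /S /= => ->; apply: ltW.
  have -> : S = (Num.Def.normr @^-1` [set 1])%classic by [].
  apply: preimage_closed; first by move=> x _; apply: norm_continuous.
  exact: closed_eq.
have [c cS' hc] := EVT_min_rV S0 cS (continuous_subspaceT (@N_cont R _ N hN)).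
have Sc : `|c| = 1 by move: cS'; rewrite inE.
case: (hN) => hz [hZ _].
have c0 : 0 < N c.
  rewrite lt_def (@Nge0 R _ N hN) // andbT. apply/eqP => /hz c0.
  by move: Sc; rewrite c0 normr0 => /eqP; rewrite eq_sym oner_eq0.
exists (N c) => // x i.
have [->|x0] := eqVneq x 0.
  by rewrite mxE normr0 mulr0 (@Nge0 R _ N hN).
have nx0 : 0 < `|x| by rewrite normr_gt0.
have hx : N x = `|x| * N (`|x|^-1 *: x).
  by rewrite hZ normfV normr_id mulrA mulfV ?gt_eqF // mul1r.
rewrite hx. rewrite mulrC. apply: ler_pM => //; first by apply: ltW.
  exact: coord_le_mxnorm.
apply: hc. rewrite inE /S /= normrZ normfV normr_id mulVf //. by rewrite gt_eqF.
Qed.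
Lemma qdiag (R : realType) m (v : 'rV[R]_m.+2) :
  qform (minkowski_diag R m.+2) v =
  v 0 0 ^+ 2 - \sum_(j < m.+1) v 0 (lift ord0 j) ^+ 2.
Proof.
rewrite /qform /minkowski_diag mul_mx_diag !mxE big_ord_recl /= !mxE /=.
rewrite -sumrN; congr (_ + _); first by rewrite mulr1 expr2.
by apply: eq_bigr => j _; rewrite !mxE /= mulrN1 expr2 mulNr.
Qed.

Lemma diag_solve (R : realType) m (e : 'rV[R]_m.+2) (B : R) :
  (forall i, `|e 0 i| <= B) ->
  exists u : 'rV[R]_m.+2,
    qform (minkowski_diag R m.+2) u = 0 /\
    qform (minkowski_diag R m.+2) (u - e) = 0 /\
    forall i, `|u 0 i| <= (m.+2)%:R * B.
Proof.
move=> hB.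
set a := e 0 0.
pose b := fun j : 'I_m.+1 => e 0 (lift ord0 j).
pose r2 := \sum_(j < m.+1) b j ^+ 2.
have r20 : 0 <= r2 by apply: sumr_ge0 => j _; apply: sqr_ge0.
pose r := Num.sqrt r2.
have rr : r ^+ 2 = r2 by rewrite sqr_sqrtr.
have r0 : 0 <= r by apply: sqrtr_ge0.
pose G := fun j : 'I_m.+1 => if r == 0 then (if (j : nat) == 0%N then 1 else 0) else b j / r.
have bj_le j : `|b j| <= r.
  rewrite -sqrtr_sqr ler_sqrt // /r2 (bigD1 j) //= lerDl.
  by apply: sumr_ge0 => k _; apply: sqr_ge0.
have hG1 j : `|G j| <= 1.
  rewrite /G; case: eqP => hr.
    by case: eqP; rewrite ?normr1 ?normr0.
  have rp : 0 < r by rewrite lt_def r0 andbT; apply/eqP.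
  by rewrite normrM normfV (gtr0_norm rp) ler_pdivrMr // mul1r.
have hGG : \sum_(j < m.+1) G j ^+ 2 = 1.
  rewrite /G; case: eqP => hr.
    rewrite big_ord_recl /= big1 ?addr0 ?expr1n //.
    by move=> j _; rewrite expr0n.
  under eq_bigr => j _ do rewrite expr_div_n.
  by rewrite -mulr_suml rr -/r2 divff // -rr expf_neq0 //; apply/eqP.
have hGb : \sum_(j < m.+1) G j * b j = r.
  rewrite /G; case: eqP => hr.
    have hr2 : r2 = 0.
      by apply/eqP; rewrite eq_le r20 andbT -sqrtr_eq0; apply/eqP.
    have hb j : b j = 0.
      apply/eqP; rewrite -sqrf_eq0; apply/eqP.
      by apply: (psumr_eq0P _ hr2) => // k _; apply: sqr_ge0.
    by rewrite big1 // => j _; rewrite hb mulr0.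
  have hr' : r != 0 by apply/eqP.
  under eq_bigr => j _ do rewrite mulrAC -expr2.
  by rewrite -mulr_suml -/r2 -rr expr2 mulfK.
pose mu := (r - `|a|) / 2.
pose s := if 0 <= a then - mu else mu.
exists (\row_i (if unlift ord0 i is Some j then mu * G j else s)).
split; last split.
- rewrite qdiag !mxE unlift_none.
  under eq_bigr => j _ do rewrite !mxE liftK exprMn.
  rewrite -mulr_sumr hGG /s; case: ifP => _; ring.
- rewrite qdiag !mxE unlift_none.
  under eq_bigr => j _ do rewrite !mxE liftK.
  have -> : \sum_(j < m.+1) (mu * G j - e 0 (lift ord0 j)) ^+ 2 =
      mu ^+ 2 * \sum_(j < m.+1) G j ^+ 2 - 2 * mu * \sum_(j < m.+1) G j * b j + r2.
    rewrite !mulr_sumr -sumrB /r2 -big_split /=.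
    by apply: eq_bigr => j _; rewrite /b; ring.
  rewrite hGG hGb -rr /s /mu -/a.
  case: (lerP 0 a) => ha.
    by rewrite (ger0_norm ha); field.
  by rewrite (ltr0_norm ha); field.
- have B0 : 0 <= B by apply: le_trans (hB 0).
  set k : R := (m.+1)%:R.
  have k1 : 1 <= k by rewrite /k ler1n.
  have hr2 : r2 <= (k * B) ^+ 2.
    apply: (@le_trans _ _ (B ^+ 2 *+ m.+1)).
      rewrite -(card_ord m.+1) -sumr_const.
      apply: ler_sum => j _.
      have := hB (lift ord0 j); rewrite -/(b j) ler_norml => /andP[h1 h2].
      nra.
    rewrite -mulr_natr -/k. nra.
  have hr : r <= k * B.
    have kB0 : 0 <= k * B by apply: mulr_ge0 => //; apply: le_trans k1.
    by rewrite -[leRHS](ger0_norm kB0) -sqrtr_sqr /r ler_sqrt ?sqr_ge0.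
  have ha : `|a| <= B by apply: hB.
  have hmu : `|mu| <= (m.+2)%:R * B.
    have e2 : (m.+2)%:R = k + 1 :> R by rewrite /k -natr1.
    rewrite e2 /mu normrM normfV (ger0_norm (ler0n R 2)).
    have := ler_normD r (- `|a|); rewrite normrN normr_id (ger0_norm r0).
    move=> h. nra.
  move=> i; rewrite mxE.
  case: unliftP => [j _|_].
    rewrite normrM; apply: le_trans hmu.
    by rewrite ler_piMr ?normr_ge0.
  by rewrite /s; case: ifP; rewrite ?normrN.
Qed.

Lemma qP (R : realType) n (A P D : 'M[R]_n) (u : 'rV[R]_n) :
  P *m A *m P^T = D -> qform A (u *m P) = qform D u.
Proof. by move=> hP; rewrite /qform trmx_mul -hP !mulmxA. Qed.

Theorem lemma2p3 (R : realType) (n : nat) (A : 'M[R]_n) (N : 'rV[R]_n -> R) :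
  (1 < n)%N -> signature_1_nm1 A -> is_norm N ->
  exists M : R, 0 < M /\
    forall x y : 'rV[R]_n, exists z : 'rV[R]_n,
      light_cone A x z /\ light_cone A y z /\ N (z - x) <= M * N (y - x).
Proof.
case: n A N => [|[|m]] A N hn //.
move=> [hAT [P [Pu hP]]] hN.
pose N2 v := N (v *m P).
have hN2 : is_norm N2.
  case: (hN) => hz [hZ hT]; split; last split.
  - move=> v /hz h. by rewrite -(mulmxK Pu v) h mul0mx.
  - by move=> a v; rewrite /N2 -scalemxAl hZ.
  - by move=> v w; rewrite /N2 mulmxDl hT.
have [c c0 hc] := @Nlower R _ N2 hN2.
have [C C0 hC] := @Nupper R _ N2 hN2.
set k : R := (m.+2)%:R.
have k0 : 0 < k by rewrite /k ltr0n.
exists ((C + 1) * k / c). split.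
  by rewrite divr_gt0 // mulr_gt0 // ltr_wpDl.
move=> x y. pose d := y - x. pose e := d *m invmx P.
have he : e *m P = d by rewrite /e mulmxKV.
have hb : forall i, `|e 0 i| <= N2 e / c.
  by move=> i; rewrite ler_pdivlMr // mulrC hc.
have [u [hu1 [hu2 hu3]]] := @diag_solve R m e _ hb.
exists (x + u *m P). split; last split.
- by rewrite /light_cone addrC addKr (@qP _ _ _ _ _ _ hP).
- have E : x + u *m P - y = (u - e) *m P.
    by rewrite mulmxBl he /d opprB [x + _]addrC -addrA.
  rewrite /light_cone E (@qP _ _ _ _ _ _ hP) //.
- rewrite addrC addKr -/(N2 u) -/d -he -/(N2 e).
  have t0 : 0 <= N2 e / c by rewrite divr_ge0 ?(@Nge0 R _ N2 hN2) // ltW.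
  apply: le_trans (hC _ _ hu3) _.
  have -> : (C + 1) * k / c * N2 e = (C + 1) * (k * (N2 e / c)).
    by field; rewrite gt_eqF.
  have kt : 0 <= k * (N2 e / c) by rewrite mulr_ge0 // ltW.
  nra.
Qed.
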